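(* Let $d\in\ell^\infty(\mathbb{Z})$ be a limit-periodic potential that has an infinite frequency integer set $S_d$. Let $\tilde d\in\ell^\infty(\mathbb{Z})$ be a limit-periodic potential with a frequency integer set $S_{\tilde d}$. If $S_{\tilde d}$ is an infinite subset of $S_d$, then $\Omega_d\cong\Omega_{\tilde d}$ as topological groups.
   Context: $\ell^\infty(\mathbb{Z})$ carries the sup norm; $\sigma$ is the left shift, $(\sigma d)_n=d_{n+1}$. For $d\in\ell^\infty(\mathbb{Z})$, $\mathrm{orb}(d)=\{\sigma^k d: k\in\mathbb{Z}\}$ and $\Omega_d=\mathrm{hull}(d)$ is the closure of $\mathrm{orb}(d)$ in $\ell^\infty(\mathbb{Z})$. A potential $p$ is periodic if $\mathrm{orb}(p)$ is finite; $d$ is limit-periodic if it lies in the $\ell^\infty$-closure of the set of periodic potentials. For limit-periodic $d$, $\Omega_d$ is compact and carries a unique topological group structure (which is abelian) with identity $d$ such that $k\mapsto\sigma^k(d)$ is a group homomorphism $\mathbb{Z}\to\Omega_d$; isomorphisms of hulls refer to this structure. The frequency module $F_d\subset\mathbb{R}$ is the set of $\alpha\in\mathbb{R}$ such that $\sigma^k(d)\mapsto e^{ik\alpha}$ extends to a continuous character of $\Omega_d$ (equivalently, the $\mathbb{Z}$-module generated by those $\alpha$ with $\lim_{n\to\infty}\frac1{2n}\sum_{k=-n}^n d(k)e^{-ik\alpha}\neq0$). A frequency integer set of $d$ is a set $S=\{n_j\}$ of positive integers with $n_j\mid n_{j+1}$ for all $j$ such that $F_d$ is the $\mathbb{Z}$-module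 generated by $\{2\pi/n_j: n_j\in S\}$. *)

(* Defs.v *)
From Stdlib Require Import Reals ZArith List.
From Coquelicot Require Import Coquelicot.
Open Scope R_scope.

Definition pot := Z -> R.
Definition bounded (d : pot) : Prop := exists M, forall n, Rabs (d n) <= M.

Definition supclose (e : R) (x y : pot) : Prop := forall n, Rabs (x n - y n) <= e.

Definition shift (k : Z) (d : pot) : pot := fun n => d (n + k)%Z.

Definition periodic (p : pot) : Prop :=
  bounded p /\ exists l : list pot, forall k : Z, In (shift k p) l.

Definition limit_periodic (d : pot) : Prop :=
  bounded d /\
  forall eps, 0 < eps -> exists p, periodic p /\ supclose eps d p.

Definition hull (d : pot) (x : pot) : Prop :=
  bounded x /\ forall eps, 0 < eps -> exists k : Z, supclose eps x (shift k d).

Definition cont_on (A : pot -> Prop) (f : pot -> pot) : Prop :=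
  forall x, A x -> forall eps, 0 < eps -> exists delta, 0 < delta /\
    forall y, A y -> supclose delta x y -> supclose eps (f x) (f y).

Definition cont2_on (A : pot -> Prop) (f : pot -> pot -> pot) : Prop :=
  forall x y, A x -> A y -> forall eps, 0 < eps -> exists delta, 0 < delta /\
    forall x' y', A x' -> A y' -> supclose delta x x' -> supclose delta y y' ->
      supclose eps (f x y) (f x' y').

Definition contC_on (A : pot -> Prop) (f : pot -> C) : Prop :=
  forall x, A x -> forall eps, 0 < eps -> exists delta, 0 < delta /\
    forall y, A y -> supclose delta x y -> Cmod (Cminus (f x) (f y)) <= eps.

(* (mul, inv) is a topological group structure on hull d with identity d such that
   k |-> sigma^k d is a group homomorphism Z -> hull d. (The context asserts that
   such a structure exists and is unique for limit-periodic d.) *)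
Definition hull_group (d : pot) (mul : pot -> pot -> pot) (inv : pot -> pot) : Prop :=
  (forall x y, hull d x -> hull d y -> hull d (mul x y)) /\
  (forall x, hull d x -> hull d (inv x)) /\
  (forall x y z, hull d x -> hull d y -> hull d z ->
     mul x (mul y z) = mul (mul x y) z) /\
  (forall x, hull d x -> mul d x = x /\ mul x d = x) /\
  (forall x, hull d x -> mul (inv x) x = d /\ mul x (inv x) = d) /\
  cont2_on (hull d) mul /\
  cont_on (hull d) inv /\
  (forall j k : Z, mul (shift j d) (shift k d) = shift (j + k)%Z d).

Definition expi (t : R) : C := (cos t, sin t).

(* alpha is in the frequency module F_d: sigma^k d |-> e^{i k alpha} extends to a
   continuous character of the hull (w.r.t. the hull group law mul). *)
Definition freq_module (d : pot) (mul : pot -> pot -> pot) (alpha : R) : Prop :=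
  exists chi : pot -> C,
    (forall x, hull d x -> Cmod (chi x) = 1) /\
    (forall x y, hull d x -> hull d y -> chi (mul x y) = Cmult (chi x) (chi y)) /\
    contC_on (hull d) chi /\
    (forall k : Z, chi (shift k d) = expi (IZR k * alpha)).

Definition zspan (G : R -> Prop) (alpha : R) : Prop :=
  exists l : list (Z * R)%type, List.Forall (fun p => G (snd p)) l /\
    alpha = fold_right (fun p acc => IZR (fst p) * snd p + acc) 0 l.

Definition freq_int_set (d : pot) (mul : pot -> pot -> pot) (S : nat -> Prop) : Prop :=
  exists n : nat -> nat,
    (forall j, (0 < n j)%nat) /\
    (forall j, Nat.divide (n j) (n (j + 1)%nat)) /\
    (forall m, S m <-> exists j, n j = m) /\
    (forall alpha, freq_module d mul alpha <->
       zspan (fun a => exists m, S m /\ a = 2 * PI / INR m) alpha).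

Definition infinite_nat_set (S : nat -> Prop) : Prop :=
  ~ exists l : list nat, forall m, S m -> In m l.

Definition hull_iso (d : pot) (mul : pot -> pot -> pot)
    (d' : pot) (mul' : pot -> pot -> pot) (Phi Psi : pot -> pot) : Prop :=
  (forall x, hull d x -> hull d' (Phi x)) /\
  (forall y, hull d' y -> hull d (Psi y)) /\
  (forall x, hull d x -> Psi (Phi x) = x) /\
  (forall y, hull d' y -> Phi (Psi y) = y) /\
  cont_on (hull d) Phi /\ cont_on (hull d') Psi /\
  (forall x y, hull d x -> hull d y -> Phi (mul x y) = mul' (Phi x) (Phi y)).

(* Main.v *)
Require Import Defs.
From Stdlib Require Import Reals ZArith List Lra Lia ClassicalEpsilon Classical FunctionalExtensionality.
From Coquelicot Require Import Coquelicot.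
Open Scope R_scope.
Local Notation shift := Defs.shift.
Local Notation bounded := Defs.bounded.

Lemma abs_tri x y z : Rabs (x - z) <= Rabs (x - y) + Rabs (y - z).
Proof. replace (x - z) with ((x - y) + (y - z)) by ring. apply Rabs_triang. Qed.

Lemma sc_sym e x y : supclose e x y -> supclose e y x.
Proof. intros H n. rewrite Rabs_minus_sym. apply H. Qed.

Lemma sc_tri a b x y z : supclose a x y -> supclose b y z -> supclose (a + b) x z.
Proof. intros H1 H2 n. eapply Rle_trans. apply (abs_tri _ (y n)). specialize (H1 n); specialize (H2 n). lra. Qed.

Lemma sc_mono a b x y : a <= b -> supclose a x y -> supclose b x y.
Proof. intros Hab H n. specialize (H n). lra. Qed.

Lemma sc_refl e x : 0 <= e -> supclose e x x.
Proof. intros He n. unfold Rminus. rewrite Rplus_opp_r, Rabs_R0. exact He. Qed.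

Lemma sc_eq x y : (forall eps, 0 < eps -> supclose eps x y) -> x = y.
Proof.
  intros H. apply functional_extensionality. intros n.
  destruct (Req_dec (x n) (y n)) as [E|E]; auto. exfalso.
  assert (P : 0 < Rabs (x n - y n)) by (apply Rabs_pos_lt; lra).
  specialize (H _ (Rmult_lt_0_compat _ _ P (Rinv_0_lt_compat 2 ltac:(lra))) n). lra.
Qed.

Lemma sc_shift e x y c : supclose e x y -> supclose e (shift c x) (shift c y).
Proof. intros H n. unfold shift. apply H. Qed.

Lemma shift_shift c m e : shift c (shift m e) = shift (m + c) e.
Proof. apply functional_extensionality; intro n; unfold shift. f_equal. lia. Qed.

Lemma shift0 e : shift 0 e = e.
Proof. apply functional_extensionality; intro n; unfold shift. f_equal. lia. Qed.

Lemma sc_shift2 e a b c dl : supclose dl (shift a e) (shift b e) ->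
  supclose dl (shift (a + c) e) (shift (b + c) e).
Proof. intros H. rewrite <- !shift_shift. now apply sc_shift. Qed.

Lemma sc_diff e k l dl : supclose dl (shift k e) (shift l e) <-> supclose dl (shift (k - l) e) e.
Proof.
  split; intro H.
  - apply (sc_shift2 _ _ _ (- l)) in H. replace (k + - l)%Z with (k - l)%Z in H by lia.
    replace (l + - l)%Z with 0%Z in H by lia. now rewrite shift0 in H.
  - assert (H' : supclose dl (shift (k - l) e) (shift 0 e)) by now rewrite shift0.
    apply (sc_shift2 _ _ 0 l) in H'.
    replace (k - l + l)%Z with k in H' by lia. now replace (0 + l)%Z with l in H' by lia.
Qed.

Lemma hull_shift e k : bounded e -> hull e (shift k e).
Proof.
  intros [M HM]. split. exists M. intro n. apply HM.
  intros eps He. exists k. apply sc_refl. lra.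
Qed.

Definition open_e (e : pot) (r : Z) : Prop :=
  (0 < r)%Z /\ exists dl, 0 < dl /\ forall m, supclose dl (shift m e) e -> (r | m)%Z.

Lemma Zmin_pos (P : Z -> Prop) : (exists z, (0 < z)%Z /\ P z) ->
  exists r, (0 < r)%Z /\ P r /\ forall a, (0 < a < r)%Z -> ~ P a.
Proof.
  intros [z [Hz Pz]]. apply NNPP; intro Hn.
  assert (K : forall n : nat, forall w, (0 < w <= Z.of_nat n)%Z -> ~ P w).
  { induction n as [|n IH]; intros w Hw Pw. lia.
    apply Hn. exists w. split; [lia|split; auto]. intros a Ha Pa.
    apply (IH a); auto. lia. }
  apply (K (Z.to_nat z) z); auto. lia.
Qed.

Lemma fin_delta (Q : nat -> R -> Prop) N :
  (forall a d1 d2, 0 < d1 <= d2 -> Q a d2 -> Q a d1) ->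
  (forall a, (a < N)%nat -> exists dl, 0 < dl /\ Q a dl) ->
  exists dl, 0 < dl /\ forall a, (a < N)%nat -> Q a dl.
Proof.
  intros Hm. induction N as [|N IH]; intros H.
  - exists 1. split. lra. intros; lia.
  - destruct IH as [d1 [Hd1 Q1]]. intros a Ha; apply H; lia.
    destruct (H N) as [d2 [Hd2 Q2]]. lia.
    exists (Rmin d1 d2). split. now apply Rmin_pos.
    intros a Ha. destruct (Nat.eq_dec a N) as [->|Hne].
    + apply (Hm _ _ d2); auto. split. now apply Rmin_pos. apply Rmin_r.
    + apply (Hm _ _ d1). split. now apply Rmin_pos. apply Rmin_l. apply Q1. lia.
Qed.

Lemma period_exists p : periodic p -> exists q, (0 < q)%Z /\ shift q p = p.
Proof.
  intros [_ [l Hl]].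
  apply NNPP; intro Hn.
  set (f := fun i : nat => shift (Z.of_nat i) p).
  assert (ND : NoDup (map f (seq 0 (S (length l))))).
  { apply NoDup_map_NoDup_ForallPairs; [|apply seq_NoDup].
    intros x y _ _ E. destruct (lt_eq_lt_dec x y) as [[Hlt|Heq]|Hgt]; auto; exfalso; apply Hn.
    - exists (Z.of_nat y - Z.of_nat x)%Z. split. lia.
      unfold f in E. apply (f_equal (shift (- Z.of_nat x))) in E.
      rewrite !shift_shift in E. replace (Z.of_nat x + - Z.of_nat x)%Z with 0%Z in E by lia.
      rewrite shift0 in E. replace (Z.of_nat y - Z.of_nat x)%Z with (Z.of_nat y + - Z.of_nat x)%Z by lia. now symmetry.
    - exists (Z.of_nat x - Z.of_nat y)%Z. split. lia.
      unfold f in E. apply (f_equal (shift (- Z.of_nat y))) in E.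
      rewrite !shift_shift in E. replace (Z.of_nat y + - Z.of_nat y)%Z with 0%Z in E by lia.
      rewrite shift0 in E. replace (Z.of_nat x - Z.of_nat y)%Z with (Z.of_nat x + - Z.of_nat y)%Z by lia. exact E. }
  apply NoDup_incl_length with (l' := l) in ND.
  - rewrite length_map, length_seq in ND. lia.
  - intros x Hx. apply in_map_iff in Hx. destruct Hx as [i [<- _]]. apply Hl.
Qed.

Lemma per_mult p q : shift q p = p -> forall t, shift (q * t) p = p.
Proof.
  intros Hq.
  assert (Hn : forall n : nat, shift (q * Z.of_nat n) p = p).
  { induction n as [|n IH]. replace (q * Z.of_nat 0)%Z with 0%Z by lia. apply shift0.
    replace (q * Z.of_nat (S n))%Z with (q * Z.of_nat n + q)%Z by lia.
    rewrite <- shift_shift, IH. exact Hq. }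
  intro t. destruct (Z_le_gt_dec 0 t).
  - replace t with (Z.of_nat (Z.to_nat t)) by lia. apply Hn.
  - specialize (Hn (Z.to_nat (- t))). apply (f_equal (shift (q * t))) in Hn.
    rewrite shift_shift in Hn. replace (q * Z.of_nat (Z.to_nat (- t)) + q * t)%Z with 0%Z in Hn by lia.
    rewrite shift0 in Hn. auto.
Qed.

Lemma L1 e : limit_periodic e -> forall eps, 0 < eps ->
  exists r, open_e e r /\ forall m, (r | m)%Z -> supclose eps (shift m e) e.
Proof.
  intros [Hb Hlp] eps He.
  destruct (Hlp (eps / 3)) as [p [Hp Hep]]. lra.
  destruct (period_exists p Hp) as [q0 [Hq0 Hper]].
  pose proof (per_mult p q0 Hper) as Hpm.
  assert (Q : forall t, supclose (2 * eps / 3) (shift (q0 * t) e) e).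
  { intro t. replace (2 * eps / 3) with (eps / 3 + eps / 3) by field.
    apply sc_tri with (shift (q0 * t) p). now apply sc_shift.
    rewrite Hpm. now apply sc_sym. }
  set (C := fun m => forall dl, 0 < dl -> exists t, supclose dl (shift m e) (shift (q0 * t) e)).
  assert (Cq : forall t, C (q0 * t)%Z).
  { intros t dl Hdl. exists t. apply sc_refl. lra. }
  assert (Cadd : forall m1 m2, C m1 -> C m2 -> C (m1 + m2)%Z).
  { intros m1 m2 H1 H2 dl Hdl.
    destruct (H1 (dl / 2)) as [t1 T1]. lra. destruct (H2 (dl / 2)) as [t2 T2]. lra.
    exists (t1 + t2)%Z. replace dl with (dl / 2 + dl / 2) by field.
    apply sc_tri with (shift (q0 * t1 + m2) e).
    - now apply sc_shift2.
    - apply (sc_shift2 _ _ _ (q0 * t1)) in T2.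
      replace (q0 * (t1 + t2))%Z with (q0 * t2 + q0 * t1)%Z by lia.
      now replace (q0 * t1 + m2)%Z with (m2 + q0 * t1)%Z by lia. }
  assert (Cneg : forall m, C m -> C (- m)%Z).
  { intros m H dl Hdl. destruct (H dl Hdl) as [t T]. exists (- t)%Z.
    apply (sc_shift2 _ _ _ (- m - q0 * t)) in T. apply sc_sym.
    replace (m + (- m - q0 * t))%Z with (q0 * (- t))%Z in T by lia.
    now replace (q0 * t + (- m - q0 * t))%Z with (- m)%Z in T by lia. }
  assert (Cmul : forall m k, C m -> C (m * k)%Z).
  { intros m k Hm.
    assert (Hn : forall n : nat, C (m * Z.of_nat n)%Z).
    { induction n as [|n IH]. replace (m * Z.of_nat 0)%Z with (q0 * 0)%Z by lia. apply Cq.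
      replace (m * Z.of_nat (S n))%Z with (m * Z.of_nat n + m)%Z by lia. now apply Cadd. }
    destruct (Z_le_gt_dec 0 k).
    - replace k with (Z.of_nat (Z.to_nat k)) by lia. apply Hn.
    - replace (m * k)%Z with (- (m * Z.of_nat (Z.to_nat (- k))))%Z by lia. now apply Cneg. }
  assert (Ceps : forall m, C m -> supclose eps (shift m e) e).
  { intros m Hm. destruct (Hm (eps / 3)) as [t T]. lra.
    replace eps with (eps / 3 + 2 * eps / 3) by field. eapply sc_tri. exact T. apply Q. }
  destruct (Zmin_pos C) as [r [Hr [Cr Hmin]]].
  { exists q0. split; auto. replace q0 with (q0 * 1)%Z by lia. apply Cq. }
  exists r. split.
  - split; auto.
    destruct (fin_delta (fun a dl => forall m, supclose dl (shift m e) e -> (m mod r)%Z <> Z.of_nat (S a))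
               (Z.to_nat r - 1)) as [dl [Hdl Hall]].
    + intros a d1 d2 Hd H2 m Hm. apply H2. eapply sc_mono; [|exact Hm]. lra.
    + intros a Ha. set (a' := Z.of_nat (S a)).
      apply NNPP; intro H. apply (Hmin a'). unfold a'; lia.
      intros dl Hdl. apply NNPP; intro H2. apply H. exists (dl / 2). split. lra.
      intros m Hm Hmod. apply H2.
      pose proof (Z.div_mod m r ltac:(lia)) as Hdm.
      destruct (Cmul r (- (m / r))%Z Cr (dl / 2)) as [t T]. lra.
      exists t. replace dl with (dl / 2 + dl / 2) by field.
      apply sc_tri with (shift (r * - (m / r)) e); auto.
      assert (H' : supclose (dl / 2) (shift m e) (shift 0 e)) by now rewrite shift0.
      apply (sc_shift2 _ _ _ (r * - (m / r))) in H'.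
      replace (m + r * - (m / r))%Z with a' in H' by lia.
      now replace (0 + r * - (m / r))%Z with (r * - (m / r))%Z in H' by lia.
    + exists dl. split; auto. intros m Hm. apply Z.mod_divide. lia.
      pose proof (Z.mod_pos_bound m r Hr).
      destruct (Z.eq_dec (m mod r) 0) as [E|E]; auto. exfalso.
      apply (Hall (Z.to_nat (m mod r) - 1)%nat) with m; auto. lia. lia.
  - intros m [k ->]. apply Ceps. rewrite Z.mul_comm. now apply Cmul.
Qed.

Lemma cos_Zper x k : cos (x + 2 * PI * IZR k) = cos x /\ sin (x + 2 * PI * IZR k) = sin x.
Proof.
  destruct (Z_le_gt_dec 0 k).
  - replace k with (Z.of_nat (Z.to_nat k)) by lia. rewrite <- INR_IZR_INZ.
    replace (2 * PI * INR (Z.to_nat k)) with (2 * INR (Z.to_nat k) * PI) by ring.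
    split; [apply cos_period|apply sin_period].
  - replace k with (- Z.of_nat (Z.to_nat (- k)))%Z by lia. rewrite opp_IZR, <- INR_IZR_INZ.
    set (n := Z.to_nat (-k)).
    pose proof (cos_period (x + 2 * PI * - INR n) n). pose proof (sin_period (x + 2 * PI * - INR n) n).
    replace (x + 2 * PI * - INR n + 2 * INR n * PI) with x in * by ring. split; auto.
Qed.

Lemma expi_per x k : expi (x + 2 * PI * IZR k) = expi x.
Proof. unfold expi. destruct (cos_Zper x k) as [-> ->]. auto. Qed.

Lemma expi_mult a b : Cmult (expi a) (expi b) = expi (a + b).
Proof. unfold expi, Cmult; simpl. rewrite cos_plus, sin_plus. f_equal; ring. Qed.

Lemma Cmod_expi t : Cmod (expi t) = 1.
Proof. unfold Cmod, expi; simpl. pose proof (sin2_cos2 t) as E. unfold Rsqr in E.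
  replace (cos t * (cos t * 1) + sin t * (sin t * 1)) with 1 by lra. apply sqrt_1. Qed.

Lemma Cmod_minus_self z : Cmod (Cminus z z) = 0.
Proof. destruct z as [a b]. unfold Cmod, Cminus, Cplus, Copp; simpl. rewrite <- sqrt_0. f_equal. ring. Qed.

Lemma L2 e mul inv r : bounded e -> hull_group e mul inv -> open_e e r ->
  freq_module e mul (2 * PI / IZR r).
Proof.
  intros Hb [H1 [H2 [H3 [H4 [H5 [H6 [H7 H8]]]]]]] [Hr [dl [Hdl Hop]]].
  set (alpha := 2 * PI / IZR r).
  assert (U : forall x k l, supclose (dl / 2) x (shift k e) -> supclose (dl / 2) x (shift l e) ->
    expi (IZR k * alpha) = expi (IZR l * alpha)).
  { intros x k l Hk Hl.
    assert (Hkl : supclose dl (shift k e) (shift l e)).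
    { replace dl with (dl / 2 + dl / 2) by field. apply sc_tri with x; auto. now apply sc_sym. }
    apply sc_diff, Hop in Hkl. destruct Hkl as [c Hc].
    replace k with (l + c * r)%Z by lia. rewrite plus_IZR, mult_IZR.
    replace ((IZR l + IZR c * IZR r) * alpha) with (IZR l * alpha + 2 * PI * IZR c).
    apply expi_per. unfold alpha. field. apply not_0_IZR. lia. }
  set (kx := fun x => epsilon (inhabits 0%Z) (fun k => supclose (dl / 2) x (shift k e))).
  assert (Kspec : forall x, hull e x -> supclose (dl / 2) x (shift (kx x) e)).
  { intros x [_ Hx]. unfold kx. apply epsilon_spec. apply Hx. lra. }
  set (chi := fun x => expi (IZR (kx x) * alpha)).
  assert (Chi : forall x k, hull e x -> supclose (dl / 2) x (shift k e) -> chi x = expi (IZR k * alpha)).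
  { intros x k Hx Hk. unfold chi. apply U with x; auto. }
  exists chi. split; [|split; [|split]].
  - intros x _. apply Cmod_expi.
  - intros x y Hx Hy.
    destruct (H6 x y Hx Hy (dl / 2)) as [eta [Heta Hc]]. lra.
    destruct Hx as [Hbx Hx]. destruct Hy as [Hby Hy].
    destruct (Hx (Rmin eta (dl / 2))) as [j Hj]. apply Rmin_pos; lra.
    destruct (Hy (Rmin eta (dl / 2))) as [k Hk]. apply Rmin_pos; lra.
    assert (hx : hull e x) by (split; auto). assert (hy : hull e y) by (split; auto).
    rewrite (Chi x j hx), (Chi y k hy), expi_mult.
    + rewrite (Chi _ (j + k)%Z). f_equal. rewrite plus_IZR. ring.
      apply H1; auto. rewrite <- H8. apply Hc; try apply hull_shift; auto.
      eapply sc_mono; [|exact Hj]. apply Rmin_l. eapply sc_mono; [|exact Hk]. apply Rmin_l.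
    + eapply sc_mono; [|exact Hk]. apply Rmin_r.
    + eapply sc_mono; [|exact Hj]. apply Rmin_r.
  - intros x Hx eps He. exists (dl / 4). split. lra. intros y Hy Hxy.
    destruct Hx as [Hbx Hx']. destruct (Hx' (dl / 4)) as [k Hk]. lra.
    assert (hx : hull e x) by (split; auto).
    rewrite (Chi x k), (Chi y k); auto.
    rewrite Cmod_minus_self. lra.
    replace (dl / 2) with (dl / 4 + dl / 4) by field. apply sc_tri with x; auto. now apply sc_sym.
    eapply sc_mono; [|exact Hk]. lra.
  - intros k. apply Chi. now apply hull_shift. apply sc_refl. lra.
Qed.

Lemma cos_le x y : 0 <= x -> x <= y -> y <= PI -> cos y <= cos x.
Proof. intros. destruct (Req_dec x y) as [->|]. lra. left. apply cos_decreasing_1; lra. Qed.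

Lemma cos_bound q b : (0 < b < q)%Z -> cos (IZR b * (2 * PI / IZR q)) <= cos (2 * PI / IZR q).
Proof.
  intros Hb. set (t0 := 2 * PI / IZR q).
  assert (HQ : 2 <= IZR q) by (apply IZR_le; lia).
  assert (HB1 : 1 <= IZR b) by (apply IZR_le; lia).
  assert (HB2 : IZR b <= IZR q - 1) by (rewrite <- minus_IZR; apply IZR_le; lia).
  assert (E : t0 * IZR q = 2 * PI) by (unfold t0; field; lra).
  pose proof PI_RGT_0.
  assert (Ht0 : 0 < t0) by nra.
  assert (Ht0' : t0 <= PI) by nra.
  set (t := IZR b * t0).
  assert (T1 : t0 <= t) by (unfold t; nra).
  assert (T2 : t <= 2 * PI - t0) by (unfold t; nra).
  destruct (Rle_dec t PI).
  - apply cos_le; lra.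
  - replace (cos t) with (cos (2 * PI - t)). apply cos_le; lra.
    replace (2 * PI - t) with (- t + 2 * PI * IZR 1) by (simpl; ring).
    destruct (cos_Zper (- t) 1) as [-> _]. apply cos_neg.
Qed.

Lemma Cmod_diff0 t : Cmod (Cminus (expi 0) (expi t)) ^ 2 = 2 - 2 * cos t.
Proof.
  unfold Cmod, Cminus, Cplus, Copp, expi; simpl. rewrite cos_0, sin_0.
  rewrite !Rmult_1_r, sqrt_sqrt. pose proof (sin2_cos2 t) as E. unfold Rsqr in E. nra.
  pose proof (pow2_ge_0 (1 - cos t)); pose proof (pow2_ge_0 (sin t)). nra.
Qed.

Lemma L3 e mul inv q : bounded e -> hull_group e mul inv -> (0 < q)%Z ->
  freq_module e mul (2 * PI / IZR q) -> open_e e q.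
Proof.
  intros Hb _ Hq [chi [_ [_ [Hc Hk]]]]. split; auto.
  destruct (Z.eq_dec q 1) as [->|Hq1].
  { exists 1. split. lra. intros. apply Z.divide_1_l. }
  set (t0 := 2 * PI / IZR q).
  assert (HQ : 2 <= IZR q) by (apply IZR_le; lia).
  assert (E : t0 * IZR q = 2 * PI) by (unfold t0; field; lra).
  pose proof PI_RGT_0.
  assert (Ht0 : 0 < t0) by nra.
  assert (Ht0' : t0 <= PI) by nra.
  assert (Hcos : cos t0 < 1) by (rewrite <- cos_0; apply cos_decreasing_1; lra).
  set (c := 2 - 2 * cos t0).
  set (eps0 := Rmin 1 (c / 2)).
  assert (He0 : 0 < eps0) by (apply Rmin_pos; unfold c; lra).
  assert (hee : hull e e) by (rewrite <- (shift0 e) at 2; apply hull_shift; auto).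
  destruct (Hc e hee eps0 He0) as [dl [Hdl Hd]].
  exists dl. split; auto. intros m Hm.
  apply sc_sym in Hm. specialize (Hd _ (hull_shift e m Hb) Hm).
  pose proof (Hk 0%Z) as E0. rewrite shift0 in E0. rewrite E0, Hk in Hd.
  replace (IZR 0 * (2 * PI / IZR q)) with 0 in Hd by (simpl; ring).
  pose proof (Cmod_diff0 (IZR m * (2 * PI / IZR q))) as Hsq.
  pose proof (Cmod_ge_0 (Cminus (expi 0) (expi (IZR m * (2 * PI / IZR q))))).
  assert (eps0 <= 1) by apply Rmin_l. assert (eps0 <= c / 2) by apply Rmin_r.
  assert (Hlt : cos t0 < cos (IZR m * t0)).
  { fold t0 in Hd, Hsq, H0. set (z := Cmod _) in *. 
    assert (z * z <= eps0 * eps0) by (apply Rmult_le_compat; lra).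
    unfold c in *. nra. }
  apply NNPP; intro Hnd.
  pose proof (Z.div_mod m q ltac:(lia)) as Hdm.
  pose proof (Z.mod_pos_bound m q ltac:(lia)).
  assert (Hb0 : (m mod q <> 0)%Z) by (intro Hz0; apply Hnd; apply Z.mod_divide; lia).
  pose proof (cos_bound q (m mod q) ltac:(lia)) as Hcb. fold t0 in Hcb.
  replace (IZR m * t0) with (IZR (m mod q) * t0 + 2 * PI * IZR (m / q)) in Hlt.
  destruct (cos_Zper (IZR (m mod q) * t0) (m / q)) as [Ec _]. lra.
  rewrite Hdm at 3. rewrite plus_IZR, mult_IZR. rewrite <- E. ring.
Qed.

Lemma arch_inv dl : 0 < dl -> exists N, forall i, (i >= N)%nat -> / (INR i + 1) < dl.
Proof.
  intros H. destruct (archimed (/ dl)) as [A _].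
  pose proof (Rinv_0_lt_compat _ H).
  assert (Hup : (0 < up (/ dl))%Z) by (apply lt_IZR; lra).
  exists (Z.to_nat (up (/ dl))). intros i Hi.
  apply le_INR in Hi. rewrite INR_IZR_INZ, Z2Nat.id in Hi by lia.
  rewrite <- (Rinv_inv dl). apply Rinv_lt_contravar. apply Rmult_lt_0_compat; auto.
  pose proof (pos_INR i); lra. lra.
Qed.

Definition UC (a b : pot) := forall eps, 0 < eps -> exists dl, 0 < dl /\
  forall k l, supclose dl (shift k a) (shift l a) -> supclose eps (shift k b) (shift l b).

Lemma EXT a b mula inva mulb invb : bounded a -> bounded b ->
  hull_group a mula inva -> hull_group b mulb invb -> UC a b ->
  exists Phi, (forall x, hull a x -> hull b (Phi x)) /\
    (forall k, Phi (shift k a) = shift k b) /\ cont_on (hull a) Phi /\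
    (forall x y, hull a x -> hull a y -> Phi (mula x y) = mulb (Phi x) (Phi y)).
Proof.
  intros Ha Hb Ga Gb Huc.
  set (ks := fun x (i : nat) => epsilon (inhabits 0%Z) (fun k => supclose (/ (INR i + 1)) x (shift k a))).
  assert (Ks : forall x i, hull a x -> supclose (/ (INR i + 1)) x (shift (ks x i) a)).
  { intros x i [_ Hx]. unfold ks. apply epsilon_spec. apply Hx.
    apply Rinv_0_lt_compat. pose proof (pos_INR i); lra. }
  set (u := fun x n i => b (n + ks x i)%Z).
  set (Phi := fun x n => epsilon (inhabits 0) (fun l => Un_cv (u x n) l)).
  assert (Cv : forall x n, hull a x -> Un_cv (u x n) (Phi x n)).
  { intros x n Hx. unfold Phi. apply epsilon_spec.
    destruct (Rcomplete.R_complete (u x n)) as [l Hl]; [|exists l; exact Hl].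
    intros eps He. destruct (Huc (eps / 2)) as [dl [Hdl Hu]]. lra.
    destruct (arch_inv (dl / 2)) as [N HN]. lra.
    exists N. intros i j Hi Hj. unfold Rdist, u.
    assert (S : supclose dl (shift (ks x i) a) (shift (ks x j) a)).
    { replace dl with (dl / 2 + dl / 2) by field. apply sc_tri with x.
      apply sc_sym. eapply sc_mono; [|apply Ks; auto]. left; apply HN; auto.
      eapply sc_mono; [|apply Ks; auto]. left; apply HN; auto. }
    specialize (Hu _ _ S n). unfold shift in Hu. lra. }
  assert (AP : forall eps, 0 < eps -> exists dl, 0 < dl /\ forall x k, hull a x ->
             supclose dl x (shift k a) -> supclose eps (Phi x) (shift k b)).
  { intros eps He. destruct (Huc (eps / 2)) as [d0 [Hd0 Hu]]. lra.
    exists (d0 / 2). split. lra. intros x k Hx Hk n.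
    destruct (Cv x n Hx (eps / 2)) as [N1 HN1]. lra.
    destruct (arch_inv (d0 / 2)) as [N2 HN2]. lra.
    set (i := Nat.max N1 N2).
    specialize (HN1 i ltac:(lia)). specialize (HN2 i ltac:(lia)).
    assert (S : supclose d0 (shift (ks x i) a) (shift k a)).
    { replace d0 with (d0 / 2 + d0 / 2) by field. apply sc_tri with x; auto.
      apply sc_sym. eapply sc_mono; [|apply Ks; auto]. lra. }
    specialize (Hu _ _ S n). unfold shift in Hu. unfold Rdist, u in HN1. unfold shift.
    eapply Rle_trans. apply (abs_tri _ (b (n + ks x i)%Z)). rewrite Rabs_minus_sym in HN1. lra. }
  assert (Img : forall x, hull a x -> hull b (Phi x)).
  { intros x Hx. destruct Hb as [M HM]. split.
    - destruct (AP 1) as [dl [Hdl Hd]]. lra. destruct Hx as [Hbx Hx'].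
      destruct (Hx' dl Hdl) as [k Hk]. exists (M + 1). intro n.
      specialize (Hd x k (conj Hbx Hx') Hk n). specialize (HM (n + k)%Z). unfold shift in Hd.
      pose proof (Rabs_triang_inv (Phi x n) (b (n + k)%Z)). lra.
    - intros eps He. destruct (AP eps He) as [dl [Hdl Hd]].
      destruct Hx as [Hbx Hx']. destruct (Hx' dl Hdl) as [k Hk]. exists k. apply Hd; auto. split; auto. }
  assert (Orb : forall k, Phi (shift k a) = shift k b).
  { intro k. apply sc_eq. intros eps He. destruct (AP eps He) as [dl [Hdl Hd]].
    apply Hd. now apply hull_shift. apply sc_refl; lra. }
  assert (Cont : cont_on (hull a) Phi).
  { intros x Hx eps He. destruct (AP (eps / 2)) as [dl [Hdl Hd]]. lra.
    exists (dl / 2). split. lra. intros y Hy Hxy.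
    destruct Hx as [Hbx Hx']. destruct (Hx' (dl / 2)) as [k Hk]. lra.
    replace eps with (eps / 2 + eps / 2) by field. apply sc_tri with (shift k b).
    apply Hd. split; auto. eapply sc_mono; [|exact Hk]. lra.
    apply sc_sym, Hd; auto. replace dl with (dl / 2 + dl / 2) by field.
    apply sc_tri with x; auto. now apply sc_sym. }
  exists Phi. split; [|split; [|split]]; auto.
  intros x y Hx Hy.
  destruct Ga as [A1 [_ [_ [_ [_ [A6 [_ A8]]]]]]].
  destruct Gb as [B1 [_ [_ [_ [_ [B6 [_ B8]]]]]]].
  apply sc_eq. intros eps He.
  destruct (B6 (Phi x) (Phi y) (Img x Hx) (Img y Hy) (eps / 2)) as [e1 [He1 Hc1]]. lra.
  destruct (AP e1 He1) as [d1 [Hd1 Ad1]].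
  destruct (AP (eps / 2)) as [d2 [Hd2 Ad2]]. lra.
  destruct (A6 x y Hx Hy d2 Hd2) as [e2 [He2 Hc2]].
  set (m := Rmin d1 e2). assert (Hm : 0 < m) by (apply Rmin_pos; auto).
  destruct Hx as [Hbx Hx']. destruct Hy as [Hby Hy'].
  destruct (Hx' m Hm) as [j Hj]. destruct (Hy' m Hm) as [k Hk].
  assert (hx : hull a x) by (split; auto). assert (hy : hull a y) by (split; auto).
  replace eps with (eps / 2 + eps / 2) by field.
  apply sc_tri with (shift (j + k) b).
  - apply Ad2. apply A1; auto. rewrite <- A8. apply Hc2; auto; try apply hull_shift; auto.
    eapply sc_mono; [|exact Hj]. apply Rmin_r. eapply sc_mono; [|exact Hk]. apply Rmin_r.
  - rewrite <- B8. apply sc_sym. apply Hc1; try apply hull_shift; auto.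
    apply Ad1; auto. eapply sc_mono; [|exact Hj]. apply Rmin_l.
    apply Ad1; auto. eapply sc_mono; [|exact Hk]. apply Rmin_l.
Qed.

Lemma zspan_gen (G1 G2 : R -> Prop) alpha :
  (forall a, G1 a -> exists c a', G2 a' /\ a = IZR c * a') -> zspan G1 alpha -> zspan G2 alpha.
Proof.
  intros H [l [Hl ->]]. induction l as [|[z a] l IH].
  - exists nil. split; auto.
  - inversion Hl as [|? ? Ha Hl']; subst. simpl in Ha.
    destruct (IH Hl') as [l2 [Hl2 E2]]. destruct (H a Ha) as [c [a' [Ha' ->]]].
    exists (((z * c)%Z, a') :: l2). split. constructor; auto.
    simpl. rewrite E2, mult_IZR. ring.
Qed.

Lemma UC_of a b : limit_periodic b -> (forall r, open_e b r -> open_e a r) -> UC a b.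
Proof.
  intros Hl Ho eps He. destruct (L1 b Hl eps He) as [r [Hr Hm]].
  destruct (Ho r Hr) as [_ [dl [Hdl Hd]]]. exists dl. split; auto.
  intros k l H. apply sc_diff in H. apply Hd in H. apply sc_diff. now apply Hm.
Qed.

Lemma INV a b (Phi Psi : pot -> pot) :
  (forall x, hull a x -> hull b (Phi x)) -> (forall k, Phi (shift k a) = shift k b) ->
  cont_on (hull a) Phi -> (forall k, Psi (shift k b) = shift k a) -> cont_on (hull b) Psi ->
  bounded a -> bounded b ->
  forall x, hull a x -> Psi (Phi x) = x.
Proof.
  intros I1 O1 C1 O2 C2 Ha Hb x Hx. apply sc_eq. intros eps He.
  destruct (C2 (Phi x) (I1 x Hx) (eps / 2)) as [eta [Heta H2]]. lra.
  destruct (C1 x Hx eta Heta) as [dl [Hdl H1]].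
  destruct Hx as [Hbx Hx']. destruct (Hx' (Rmin dl (eps / 2))) as [k Hk]. apply Rmin_pos; lra.
  replace eps with (eps / 2 + eps / 2) by field. apply sc_tri with (shift k a).
  - rewrite <- (O2 k). apply H2. apply hull_shift; auto. rewrite <- (O1 k). apply H1.
    apply hull_shift; auto. eapply sc_mono; [|exact Hk]. apply Rmin_l.
  - apply sc_sym. eapply sc_mono; [|exact Hk]. apply Rmin_r.
Qed.

Lemma chain_div (N : nat -> nat) : (forall j, Nat.divide (N j) (N (j + 1)%nat)) ->
  forall j k, Nat.divide (N j) (N (j + k)%nat).
Proof.
  intros H j k. induction k as [|k IH]. rewrite Nat.add_0_r. apply Nat.divide_refl.
  eapply Nat.divide_trans. exact IH. replace (j + S k)%nat with (j + k + 1)%nat by lia. apply H.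
Qed.

Theorem theorem2p9 :
  forall (d dt : pot) (mul : pot -> pot -> pot) (inv : pot -> pot)
         (mult : pot -> pot -> pot) (invt : pot -> pot) (Sd Sdt : nat -> Prop),
    limit_periodic d -> limit_periodic dt ->
    hull_group d mul inv -> hull_group dt mult invt ->
    freq_int_set d mul Sd -> infinite_nat_set Sd ->
    freq_int_set dt mult Sdt ->
    infinite_nat_set Sdt -> (forall m, Sdt m -> Sd m) ->
    exists Phi Psi : pot -> pot, hull_iso d mul dt mult Phi Psi.
Proof.
  intros d dt mul inv mult invt Sd Sdt Ld Ldt Gd Gdt Fd _ Fdt Inf Sub.
  destruct Fd as [N [HN0 [Hdiv [HS HF]]]]. destruct Fdt as [Nt [_ [_ [HSt HFt]]]].
  pose proof (proj1 Ld) as Bd. pose proof (proj1 Ldt) as Bdt.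
  assert (Gen : forall a, (exists m, Sd m /\ a = 2 * PI / INR m) ->
            exists c a', (exists m, Sdt m /\ a' = 2 * PI / INR m) /\ a = IZR c * a').
  { intros a [n [Hn ->]]. apply HS in Hn. destruct Hn as [j <-].
    assert (Hex : exists m, Sdt m /\ ~ In m (map N (seq 0 (S j)))).
    { apply NNPP; intro Hno. apply Inf. exists (map N (seq 0 (S j))). intros m Hm.
      apply NNPP; intro Hni. apply Hno. exists m; auto. }
    destruct Hex as [m [Hm Hni]]. pose proof (Sub m Hm) as Hm'. apply HS in Hm'.
    destruct Hm' as [i Ei].
    assert (Hij : (j < i)%nat).
    { destruct (Nat.lt_ge_cases j i); auto. exfalso. apply Hni. rewrite <- Ei.
      apply in_map. apply in_seq. lia. }
    destruct (chain_div N Hdiv j (i - j)) as [z Hz]. replace (j + (i - j))%nat with i in Hz by lia.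
    exists (Z.of_nat z), (2 * PI / INR m). split. exists m; auto.
    rewrite <- INR_IZR_INZ. rewrite <- Ei, Hz, mult_INR.
    pose proof (HN0 i) as P. rewrite Hz in P.
    assert (INR z <> 0) by (apply not_0_INR; intro; subst; lia).
    assert (INR (N j) <> 0) by (apply not_0_INR; specialize (HN0 j); lia).
    field; auto. }
  assert (O1 : forall r, open_e dt r -> open_e d r).
  { intros r Hr. apply (L3 d mul inv); auto. apply Hr. apply HF.
    pose proof (L2 dt mult invt r Bdt Gdt Hr) as Hf. apply HFt in Hf.
    revert Hf. apply zspan_gen. intros a [m [Hm ->]]. exists 1%Z, (2 * PI / INR m).
    split. exists m; auto. simpl; ring. }
  assert (O2 : forall r, open_e d r -> open_e dt r).
  { intros r Hr. apply (L3 dt mult invt); auto. apply Hr. apply HFt.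
    pose proof (L2 d mul inv r Bd Gd Hr) as Hf. apply HF in Hf.
    revert Hf. apply zspan_gen. exact Gen. }
  destruct (EXT d dt mul inv mult invt Bd Bdt Gd Gdt (UC_of d dt Ldt O1)) as [Phi [I1 [R1 [C1 M1]]]].
  destruct (EXT dt d mult invt mul inv Bdt Bd Gdt Gd (UC_of dt d Ld O2)) as [Psi [I2 [R2 [C2 M2]]]].
  exists Phi, Psi. split; [|split; [|split; [|split; [|split; [|split]]]]]; auto.
  - apply (INV d dt); auto.
  - apply (INV dt d); auto.
Qed.
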